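(* Let $G$ and $H$ be locally finite stiff graphs without isolated vertices. If $N(G)\cong N(H)$ as simplicial complexes, then $K_2\times G\cong K_2\times H$ as 2-colored graphs (i.e. via a graph isomorphism commuting with the first projections to $K_2$).
   Context: A graph $G$ is a set $V(G)$ with a symmetric subset $E(G)\subset V(G)\times V(G)$ (loops allowed); $N(v)=\{w:(v,w)\in E(G)\}$, $v$ isolated if $N(v)=\emptyset$; $G$ is locally finite if every $N(v)$ is finite, and stiff if $N(v)\subset N(w)$ implies $v=w$. The neighborhood complex $N(G)$ is the simplicial complex whose vertices are the non-isolated vertices of $G$ and whose simplices are the finite subsets contained in some $N(v)$. $K_2\times G$ has vertex set $\{1,2\}\times V(G)$, $((i,x),(j,y))$ an edge iff $i\neq j$ and $(x,y)\in E(G)$, and is 2-colored by the first projection to $K_2$ (vertices $\{1,2\}$, edges $(1,2),(2,1)$). *)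

(* Defs.v *)
(* graphs may be infinite, so vertex sets are arbitrary Types. *)
From Stdlib Require Import List.
Import ListNotations.

(* A graph is a vertex type V with a symmetric relation E (loops allowed). *)
Definition symmetric_rel {V : Type} (E : V -> V -> Prop) : Prop :=
  forall x y, E x y -> E y x.

Definition isolated {V : Type} (E : V -> V -> Prop) (v : V) : Prop :=
  forall w, ~ E v w.

Definition no_isolated {V : Type} (E : V -> V -> Prop) : Prop :=
  forall v, ~ isolated E v.

Definition locally_finite {V : Type} (E : V -> V -> Prop) : Prop :=
  forall v, exists l : list V, forall w, E v w -> In w l.

Definition stiff {V : Type} (E : V -> V -> Prop) : Prop :=
  forall v w, (forall x, E v x -> E w x) -> v = w.

Definition bijective_map {A B : Type} (f : A -> B) : Prop :=
  exists g : B -> A, (forall a, g (f a) = a) /\ (forall b, f (g b) = b).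

Definition graph_iso {V W : Type} (E : V -> V -> Prop) (F : W -> W -> Prop)
  (f : V -> W) : Prop :=
  bijective_map f /\ forall x y, E x y <-> F (f x) (f y).

(* Neighborhood complex N(G): vertices are the non-isolated vertices of G;
   simplices are the nonempty finite subsets (given by lists) contained in
   some N(v). *)
Definition NVert {V : Type} (E : V -> V -> Prop) : Type :=
  { v : V | ~ isolated E v }.

Definition N_simplex {V : Type} (E : V -> V -> Prop) (s : list (NVert E)) : Prop :=
  s <> [] /\ exists v : V, forall x, In x s -> E v (proj1_sig x).

Definition nbhd_complex_iso {V W : Type} (E : V -> V -> Prop) (F : W -> W -> Prop) : Prop :=
  exists f : NVert E -> NVert F,
    bijective_map f /\ forall s, N_simplex E s <-> N_simplex F (map f s).

(* K_2 × G: vertices {1,2} × V(G), encoded as bool * V. *)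
Definition K2x {V : Type} (E : V -> V -> Prop) : bool * V -> bool * V -> Prop :=
  fun p q => fst p <> fst q /\ E (snd p) (snd q).

Definition K2x_iso_colored {V W : Type} (E : V -> V -> Prop) (F : W -> W -> Prop) : Prop :=
  exists phi : bool * V -> bool * W,
    graph_iso (K2x E) (K2x F) phi /\ forall p, fst (phi p) = fst p.

(* Main.v *)
Require Import Defs.
From Stdlib Require Import List.
From Stdlib Require Import Classical ClassicalEpsilon ProofIrrelevance.
Import ListNotations.

Lemma fin_list {V : Type} (Q : V -> Prop) (P : V -> Prop) (l : list V)
  (hl : forall w, P w -> In w l) (hQ : forall w, Q w) :
  exists s : list {v | Q v}, forall x, In x s <-> P (proj1_sig x).
Proof.
  exists (flat_map (fun w => if excluded_middle_informative (P w)
                   then [exist _ w (hQ w)] else []) l).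
  intros [x qx]; simpl. rewrite in_flat_map. split.
  - intros [w [_ Hw]]. destruct (excluded_middle_informative (P w)) as [p|p].
    + destruct Hw as [Hw|[]]. inversion Hw; subst. exact p.
    + destruct Hw.
  - intros px. exists x. split; [now apply hl|].
    destruct (excluded_middle_informative (P x)) as [p|p]; [|contradiction].
    left. f_equal. apply proof_irrelevance.
Qed.

Lemma map_inv {A B : Type} (f : A -> B) (g : B -> A) (h : forall b, f (g b) = b)
  (s : list B) : map f (map g s) = s.
Proof. induction s; simpl; congruence. Qed.

Lemma key {V W : Type} (E : V -> V -> Prop) (F : W -> W -> Prop)
  (lfE : locally_finite E) (lfF : locally_finite F)
  (stE : stiff E) (niE : no_isolated E) (niF : no_isolated F)
  (f : NVert E -> NVert F) (finv : NVert F -> NVert E)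
  (h1 : forall a, finv (f a) = a) (h2 : forall b, f (finv b) = b)
  (hs : forall s, N_simplex E s <-> N_simplex F (map f s)) :
  forall v, exists w, forall x : NVert E, E v (proj1_sig x) <-> F w (proj1_sig (f x)).
Proof.
  intros v.
  destruct (lfE v) as [l hl].
  destruct (fin_list (fun u => ~ isolated E u) (E v) l hl niE) as [s Hs].
  assert (Hne : exists u, E v u).
  { apply NNPP. intro H. apply (niE v). intros u Hu. apply H. eauto. }
  destruct Hne as [u0 Hu0].
  set (x0 := exist (fun u => ~ isolated E u) u0 (niE u0)).
  assert (Hx0 : In x0 s) by (apply Hs; exact Hu0).
  assert (Ss : N_simplex E s).
  { split. { intro e; rewrite e in Hx0; destruct Hx0. }
    exists v. intros x Hx. now apply Hs. }
  apply hs in Ss. destruct Ss as [_ [w Hw]].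
  exists w.
  destruct (lfF w) as [l2 hl2].
  destruct (fin_list (fun u => ~ isolated F u) (F w) l2 hl2 niF) as [t Ht].
  assert (St : N_simplex F (map f (map finv t))).
  { rewrite map_inv by exact h2. split.
    - intro e. assert (In (f x0) t).
      { apply Ht. apply Hw. apply in_map. exact Hx0. }
      rewrite e in H; destruct H.
    - exists w. intros x Hx. now apply Ht. }
  apply hs in St. destruct St as [_ [v' Hv']].
  assert (vv : v = v').
  { apply stE. intros y Ey.
    set (xy := exist (fun u => ~ isolated E u) y (niE y)).
    change y with (proj1_sig xy). rewrite <- (h1 xy).
    apply Hv'. apply in_map. apply Ht. apply Hw. apply in_map. apply Hs. exact Ey. }
  subst v'.
  intros x. split.
  - intro Ex. apply Hw. apply in_map. now apply Hs.
  - intro Fx. rewrite <- (h1 x). apply Hv'. apply in_map. now apply Ht.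
Qed.

Theorem corollary4p12 (V W : Type) (E : V -> V -> Prop) (F : W -> W -> Prop)
  (hE : symmetric_rel E) (hF : symmetric_rel F)
  (lfE : locally_finite E) (lfF : locally_finite F)
  (stE : stiff E) (stF : stiff F)
  (niE : no_isolated E) (niF : no_isolated F)
  (hN : nbhd_complex_iso E F) :
  K2x_iso_colored E F.
Proof.
  destruct hN as [f [[finv [h1 h2]] hs]].
  assert (hs' : forall s, N_simplex F s <-> N_simplex E (map finv s)).
  { intros s. rewrite hs. rewrite map_inv by exact h2. tauto. }
  pose proof (key E F lfE lfF stE niE niF f finv h1 h2 hs) as K1.
  pose proof (key F E lfF lfE stF niF niE finv f h2 h1 hs') as K2.
  set (g := fun v => proj1_sig (constructive_indefinite_description _ (K1 v))).
  assert (Hg : forall v x, E v (proj1_sig x) <-> F (g v) (proj1_sig (f x))).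
  { intros v. exact (proj2_sig (constructive_indefinite_description _ (K1 v))). }
  set (hh := fun w => proj1_sig (constructive_indefinite_description _ (K2 w))).
  assert (Hh : forall w y, F w (proj1_sig y) <-> E (hh w) (proj1_sig (finv y))).
  { intros w. exact (proj2_sig (constructive_indefinite_description _ (K2 w))). }
  clearbody g hh.
  assert (UF : forall w w', (forall x, F w (proj1_sig (f x)) -> F w' (proj1_sig (f x))) -> w = w').
  { intros w w' H. apply stF. intros y Fy.
    set (yy := exist (fun u => ~ isolated F u) y (niF y)).
    assert (Hy : y = proj1_sig (f (finv yy))) by (rewrite h2; reflexivity).
    rewrite Hy in *. now apply H. }
  assert (UE : forall v v', (forall y, E v (proj1_sig (finv y)) -> E v' (proj1_sig (finv y))) -> v = v').
  { intros v v' H. apply stE. intros y Ey.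
    set (yy := exist (fun u => ~ isolated E u) y (niE y)).
    assert (Hy : y = proj1_sig (finv (f yy))) by (rewrite h1; reflexivity).
    rewrite Hy in *. now apply H. }
  assert (gh : forall w, g (hh w) = w).
  { intros w. apply UF. intros x Hx. apply Hg in Hx. rewrite <- (h1 x) in Hx.
    now apply Hh in Hx. }
  assert (hg : forall v, hh (g v) = v).
  { intros v. apply UE. intros y Hy. apply Hh in Hy. rewrite <- (h2 y) in Hy.
    now apply Hg in Hy. }
  set (fv := fun v => proj1_sig (f (exist (fun u => ~ isolated E u) v (niE v)))).
  set (fi := fun w => proj1_sig (finv (exist (fun u => ~ isolated F u) w (niF w)))).
  assert (Hfv : forall v x, E v x <-> F (g v) (fv x)).
  { intros v x. exact (Hg v (exist _ x (niE x))). }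
  assert (fif : forall v, fi (fv v) = v).
  { intros v. unfold fi, fv.
    replace (exist (fun u => ~ isolated F u) (proj1_sig (f (exist (fun u => ~ isolated E u) v (niE v)))) (niF _))
      with (f (exist (fun u => ~ isolated E u) v (niE v))).
    - now rewrite h1.
    - destruct (f _) as [a pa]; simpl. f_equal. apply proof_irrelevance. }
  assert (ffi : forall w, fv (fi w) = w).
  { intros w. unfold fi, fv.
    replace (exist (fun u => ~ isolated E u) (proj1_sig (finv (exist (fun u => ~ isolated F u) w (niF w)))) (niE _))
      with (finv (exist (fun u => ~ isolated F u) w (niF w))).
    - now rewrite h2.
    - destruct (finv _) as [a pa]; simpl. f_equal. apply proof_irrelevance. }
  exists (fun p : bool * V => if fst p then (true, fv (snd p)) else (false, g (snd p))).
  split; [split|].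
  - exists (fun p : bool * W => if fst p then (true, fi (snd p)) else (false, hh (snd p))).
    split; intros [[|] a]; simpl; f_equal; auto.
  - intros [[|] a] [[|] b]; unfold K2x; simpl; split; intros [H1 H2];
      try (exfalso; now apply H1); split; try discriminate.
    + apply hF. apply Hfv. apply hE. exact H2.
    + apply hE. apply Hfv. apply hF. exact H2.
    + now apply Hfv.
    + now apply Hfv.
  - intros [[|] a]; reflexivity.
Qed.
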